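(* Let $d\in\mathbb N$, $\mathcal D=\{1,\dots,d\}$, $f\in \mathrm L_2(\mathbb T^d)$ and $d_s\in\mathcal D$. Then $$\mathrm T_{d_s}f=\sum_{\substack{\mathbf u\subseteq\mathcal D\\|\mathbf u|\le d_s}}\left[\sum_{n=|\mathbf u|}^{d_s}(-1)^{n-|\mathbf u|}\binom{d-|\mathbf u|}{n-|\mathbf u|}\right]\mathrm P_{\mathbf u}f.$$
   Context: $\mathbb T=[0,1)$ with periodic identification. For $\mathbf u\subseteq\mathcal D$, $\mathbf u^c=\mathcal D\setminus\mathbf u$, $\mathbf x_{\mathbf u}=(x_i)_{i\in\mathbf u}$. Projection: $\mathrm P_{\mathbf u}f(\mathbf x_{\mathbf u})=\int_{\mathbb T^{|\mathbf u^c|}}f(\mathbf x)\,d\mathbf x_{\mathbf u^c}$, viewed as a function on $\mathbb T^d$. ANOVA terms: $f_{\mathbf u}=\mathrm P_{\mathbf u}f-\sum_{\mathbf v\subsetneq\mathbf u}f_{\mathbf v}$ (recursively). $\mathrm T_{d_s}f=\sum_{\mathbf u\subseteq\mathcal D,\,|\mathbf u|\le d_s}f_{\mathbf u}$. *)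

(* Defs.v *)
From HB Require Import structures.
From mathcomp Require Import all_boot all_order all_algebra.
From mathcomp Require Import all_classical all_reals all_analysis.
Set Implicit Arguments. Unset Strict Implicit. Unset Printing Implicit Defensive.
Import Order.TTheory GRing.Theory Num.Theory.
Local Open Scope classical_set_scope.
Local Open Scope ring_scope.

(* Points of T^d = [0,1)^d are d-tuples of reals (coordinates indexed by 'I_d,
   i.e. D = {0,...,d-1} instead of {1,...,d}). *)
Section anova.
Variable (R : realType) (d : nat).

Definition upd (x : d.-tuple R) (i : 'I_d) (t : R) : d.-tuple R :=
  [tuple (if j == i then t else tnth x j) | j < d].

Definition torus_pt (x : d.-tuple R) : Prop :=
  forall i : 'I_d, 0 <= tnth x i < 1.

Fixpoint iint (s : seq 'I_d) (g : d.-tuple R -> R) (x : d.-tuple R) : R :=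
  match s with
  | [::] => g x
  | i :: s' => Rintegral (@lebesgue_measure R) `[0%R, 1%R[
                 (fun t => iint s' g (upd x i t))
  end.

Fixpoint iint_e (s : seq 'I_d) (g : d.-tuple R -> \bar R) (x : d.-tuple R)
    : \bar R :=
  match s with
  | [::] => g x
  | i :: s' => (\int[@lebesgue_measure R]_(t in `[0%R, 1%R[)
                 iint_e s' g (upd x i t))%E
  end.

(* f in L_2(T^d): measurable (product Borel sigma-algebra on tuples) and
   square-integrable over [0,1)^d (the integral of the nonnegative |f|^2 is
   computed as an iterated integral, which equals the product-measure integral
   by Tonelli; the starting point is irrelevant since every coordinate is
   integrated out). *)
Definition L2_torus (f : d.-tuple R -> R) : Prop :=
  measurable_fun [set: d.-tuple R] f /\
  (iint_e (enum 'I_d) (fun x => ((f x) ^+ 2)%:E) [tuple (0%R : R) | _ < d] < +oo)%E.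

Definition projP (u : {set 'I_d}) (f : d.-tuple R -> R) (x : d.-tuple R) : R :=
  iint (enum (~: u)) f x.

(* ANOVA terms f_u = P_u f - sum_{v proper subset of u} f_v, defined by
   recursion with a fuel parameter; fuel #|u|.+1 is always sufficient. *)
Fixpoint anova_aux (n : nat) (f : d.-tuple R -> R) (u : {set 'I_d})
    (x : d.-tuple R) : R :=
  match n with
  | 0 => 0
  | n'.+1 => projP u f x - \sum_(v : {set 'I_d} | v \proper u) anova_aux n' f v x
  end.

Definition anova (f : d.-tuple R -> R) (u : {set 'I_d}) : d.-tuple R -> R :=
  anova_aux #|u|.+1 f u.

Definition trunc_anova (ds : nat) (f : d.-tuple R -> R) (x : d.-tuple R) : R :=
  \sum_(u : {set 'I_d} | (#|u| <= ds)%N) anova f u x.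

End anova.

(* Main.v *)
Require Import Defs.
From HB Require Import structures.
From mathcomp Require Import all_boot all_order all_algebra.
From mathcomp Require Import all_classical all_reals all_analysis.
Import Order.TTheory GRing.Theory Num.Theory.
Local Open Scope ring_scope.

Section C.
Variable R : comPzRingType.

Lemma alt_sum (T : finType) (A B : {set T}) : A \proper B ->
  \sum_(v : {set T} | (A \subset v) && (v \subset B)) (-1)^+#|v| = 0 :> R.
Proof.
case/fintype.properP => sAB [i iB iA].
rewrite (bigID [pred v : {set T} | i \in v]) /=.
rewrite (reindex_onto (fun v => i |: v) (fun v => v :\ i)) /=; last first.
  by move=> v /andP[_ iv]; exact: finset.setD1K.
rewrite (eq_big (fun v : {set T} => ((A \subset v) && (v \subset B)) && (i \notin v))
   (fun v : {set T} => - (-1)^+#|v| : R)).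
- by rewrite sumrN addNr.
- move=> v; case iv: (i \in v).
  + rewrite (finset.setUidPr _) ?finset.sub1set // finset.eqEsubset finset.subsetDl /= iv /= !andbF.
    have -> : (v \subset v :\ i) = false.
      by apply/negbTE/negP => /fintype.subsetP/(_ i iv); rewrite !inE eqxx.
    by rewrite andbF.
  + rewrite finset.setU1K ?iv // eqxx setU11 /= !andbT.
    rewrite finset.subUset finset.sub1set iB /=; congr andb.
    apply/idP/idP => H; last exact: (fintype.subset_trans H (finset.subsetU1 _ _)).
    apply/fintype.subsetP => y yA; have := fintype.subsetP H y yA; rewrite !inE.
    case/orP => // /eqP yi; by rewrite -yi yA in iA.
- move=> v /andP[_ /eqP <-]; by rewrite cardsU1 !inE eqxx /= exprS mulN1r.
Qed.
End C.

Lemma inner_sum (R : comPzRingType) (T : finType) (w u : {set T}) : w \proper u ->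
  \sum_(v : {set T} | (v \proper u) && (w \subset v)) (-1)^+#|v| = - (-1)^+#|u| :> R.
Proof.
move=> wu; have := @alt_sum R T _ _ wu.
rewrite (bigD1 u) /=; last by rewrite fintype.subxx andbT; case/andP: wu.
move/eqP; rewrite addrC addr_eq0 => /eqP <-.
by apply: eq_bigl => v; rewrite finset.properEneq; case: (v != u); case: (w \subset v); case: (v \subset u);
  rewrite ?andbT ?andbF.
Qed.

Lemma anova_auxE (R : realType) d n (f : d.-tuple R -> R) (u : {set 'I_d}) x : (#|u| < n)%N ->
  anova_aux n f u x =
  \sum_(v : {set 'I_d} | v \subset u) (-1)^+(#|u| + #|v|) * projP v f x.
Proof.
elim: n u => [//|n IH] u hu /=.
rewrite (eq_bigr (fun v : {set 'I_d} => \sum_(w : {set 'I_d} | w \subset v) (-1)^+(#|v|+#|w|) * projP w f x)); last first.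
  move=> v vu; apply: IH. apply: leq_trans (proper_card vu) _; by rewrite -ltnS.
rewrite [X in _ - X](exchange_big_dep (fun w : {set 'I_d} => w \subset u)) /=; last first.
  by move=> v w /fintype.properP[vu _] wv; exact: fintype.subset_trans wv vu.
rewrite [RHS](bigD1 u) //= [X in _ - X](bigD1 u) //=.
rewrite big_pred0; last first.
  by move=> v; apply/negbTE/negP => /andP[/fintype.properP[vu [i iu iv]] uv]; move/fintype.subsetP: uv => /(_ i iu); rewrite (negbTE iv).
rewrite add0r -signr_odd addnn odd_double expr0 mul1r; congr (_ + _).
rewrite -sumrN; apply: eq_bigr => w /andP[wu wnu].
have pw : w \proper u by rewrite finset.properEneq wnu .
under eq_bigr do rewrite exprD -mulrA.
rewrite -big_distrl /= inner_sum // mulNr opprK exprD mulrA.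
by []. 
Qed.

Lemma card_sup (T : finType) (w : {set T}) j : (#|w| <= j)%N ->
  #|[set u : {set T} | (w \subset u) && (#|u| == j)]| = 'C(#|T| - #|w|, j - #|w|).
Proof.
move=> wj.
have cC : #|~: w| = (#|T| - #|w|)%N by rewrite -(cardsC w) addKn.
rewrite -cC -cards_draws.
have -> : [set u : {set T} | (w \subset u) && (#|u| == j)] =
   (fun B => w :|: B) @: [set B : {set T} | (B \subset ~: w) && (#|B| == (j - #|w|)%N)].
  apply/setP => u; rewrite inE; apply/andP/imsetP.
  - move=> [wu /eqP uj]; exists (u :\: w).
      by rewrite inE cardsD (finset.setIidPr wu) uj eqxx andbT finset.setDE finset.subsetIr.
    apply/setP => y; rewrite !inE; case yw: (y \in w) => //=.
    by rewrite (fintype.subsetP wu y yw).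
  - move=> [B]; rewrite inE => /andP[Bw /eqP Bj] ->; split.
      exact: finset.subsetUl.
    rewrite cardsU Bj.
    have -> : w :&: B = finset.set0.
      apply/setP => y; rewrite !inE; apply/negbTE/negP => /andP[yw yB].
      by have := fintype.subsetP Bw y yB; rewrite inE yw.
    by rewrite cards0 subn0 subnKC.
apply: card_in_imset => B1 B2; rewrite !inE => /andP[B1w _] /andP[B2w _] e.
have key : forall B : {set T}, B \subset ~: w -> B = (w :|: B) :&: ~: w.
  by move=> B Bw; rewrite finset.setIUl finset.setICr finset.set0U (finset.setIidPl Bw).
by rewrite (key _ B1w) (key _ B2w) e.
Qed.

Theorem corollary4p5 (R : realType) (d : nat) (f : d.-tuple R -> R)
  (hf : L2_torus f) (ds : nat) (hds : (1 <= ds <= d)%N)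
  (x : d.-tuple R) (hx : torus_pt x) :
  trunc_anova ds f x =
  \sum_(u : {set 'I_d} | (#|u| <= ds)%N)
     (\sum_(#|u| <= n < ds.+1)
        (-1) ^+ (n - #|u|) * ('C(d - #|u|, n - #|u|))%:R) * projP u f x.
Proof.
rewrite /trunc_anova.
under eq_bigr do rewrite /anova anova_auxE ?ltnSn //.
rewrite (exchange_big_dep (fun w : {set 'I_d} => (#|w| <= ds)%N)) /=; last first.
  by move=> u w uds wu; exact: leq_trans (subset_leq_card wu) uds.
apply: eq_bigr => w wds.
rewrite -big_distrl /=; congr (_ * _).
rewrite (partition_big (fun u : {set 'I_d} => (inord #|u| : 'I_ds.+1)) xpredT) //=.
pose G n := (-1) ^+ (n + #|w|) *+ #|[set u : {set 'I_d} | (w \subset u) && (#|u| == n)]| : R.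
rewrite (eq_bigr (fun j : 'I_ds.+1 => G j)); last first.
  move=> j _; rewrite /G -sumr_const; apply: eq_big.
    move=> u; rewrite inE; have [uds|dsu] := leqP #|u| ds.
      rewrite -(inj_eq val_inj) /= inordK ?ltnS //.
    rewrite /=; apply/esym/negbTE/negP => /andP[_ /eqP uj].
    by have := ltn_ord j; rewrite -uj ltnS leqNgt dsu.
  by move=> u /andP[/andP[uds _] /eqP <-]; rewrite inordK // ltnS.
rewrite -(big_mkord xpredT G).
rewrite (big_cat_nat (n:=#|w|)) //=; last exact: leqW.
rewrite big_nat_cond big1 ?add0r; last first.
  move=> n /andP[/andP[_ nw] _]; rewrite /G.
  have -> : [set u : {set 'I_d} | (w \subset u) && (#|u| == n)] = finset.set0.
    apply/setP => u; rewrite !inE; apply/negbTE/negP => /andP[wu /eqP un].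
    by have := subset_leq_card wu; rewrite un leqNgt nw.
  by rewrite cards0 mulr0n.
apply: eq_big_nat => n /andP[wn _].
rewrite /G card_sup // card_ord mulr_natr; congr (_ *+ _).
by rewrite -signr_odd -[RHS]signr_odd oddD oddB.
Qed.
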